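(* Consider the $r$-cGA (without frequency borders) maximizing $r$-OneMax on $\{0,\dots,r-1\}^n$, and suppose that at some time the frequency $p^{(t)}_{i,r-1}$ has reached a value of at least $k/r$, where $k>0$. Suppose $K\ge c\,r\sqrt{n}\log n$ for a sufficiently large constant $c$, and $K$ and $r$ are bounded by polynomials in $n$. Then, for a constant $c'>0$, the probability that $p^{(t)}_{i,r-1}$ drops below $k/r-1/(2r)$ within the next $T^{*}=c'K\sqrt{n}\log r$ iterations is at most $n^{-c''}$, where $c''\ge K/(288r\sqrt{n}\ln n)$.
   Context: Let $n\ge 1$, $r\ge 2$ be integers and $K>0$. $r$-OneMax$(x)=\sum_{i=1}^n \mathbf 1[x_i=r-1]$ for $x\in\{0,\dots,r-1\}^n$. The $r$-valued compact genetic algorithm ($r$-cGA) with parameter $K$ maintains frequencies $p^{(t)}_{i,j}$ for $i\in\{1,\dots,n\}$, $j\in\{0,\dots,r-1\}$, initially all $1/r$. In iteration $t$ it samples two strings $x,y$ independently, each position $i$ of each string taking value $j$ with probability $p^{(t)}_{i,j}$ independently of other positions; if $f(x)<f(y)$ then $x$ and $y$ are swapped; then for all $i,j$, $p^{(t+1)}_{i,j}=p^{(t)}_{i,j}+\frac1K(\mathbf 1[x_i=j]-\mathbf 1[y_i=j])$. Here $f$ is the function to be maximized. *)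

(* Defs.v *)
From HB Require Import structures.
From mathcomp Require Import all_boot all_order all_algebra.
From mathcomp Require Import reals exp.
Set Implicit Arguments. Unset Strict Implicit. Unset Printing Implicit Defensive.
Import Order.TTheory GRing.Theory Num.Theory.
Local Open Scope ring_scope.

Section RcGA.
Variables (R : realType) (n r : nat) (K : R).

Definition rstring := {ffun 'I_n -> 'I_r}.
Definition freqs := 'I_n -> 'I_r -> R.

Definition rOneMax (x : rstring) : nat := \sum_(i < n) ((x i : nat) == r.-1).

Definition init_freqs : freqs := fun _ _ => r%:R^-1.

Definition sample_prob (p : freqs) (x : rstring) : R := \prod_(i < n) p i (x i).

Definition cga_update (p : freqs) (x y : rstring) : freqs :=
  let: (w, l) := if (rOneMax x < rOneMax y)%N then (y, x) else (x, y) in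
  fun i j => p i j + K^-1 * (((w i == j) : nat)%:R - ((l i == j) : nat)%:R).

Inductive reachable : freqs -> Prop :=
| reach_init : reachable init_freqs
| reach_step p x y : reachable p -> 0 < sample_prob p x * sample_prob p y ->
    reachable (cga_update p x y).

(* probability that, starting from state p, the process is in a state
   satisfying [bad] at some time 0, 1, ..., T *)
Fixpoint hit_prob (bad : freqs -> bool) (T : nat) (p : freqs) : R :=
  if bad p then 1 else
  match T with
  | 0 => 0
  | T'.+1 => \sum_(x : rstring) \sum_(y : rstring)
       sample_prob p x * sample_prob p y * hit_prob bad T' (cga_update p x y)
  end.

End RcGA.

(* Main.v *)
Require Import Defs.
From HB Require Import structures.
From mathcomp Require Import all_boot all_order all_algebra.
From mathcomp Require Import reals exp.
From mathcomp Require Import sequences ring lra zify.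
Set Implicit Arguments. Unset Strict Implicit. Unset Printing Implicit Defensive.
Import Order.TTheory GRing.Theory Num.Theory.
Local Open Scope ring_scope.

Section Aux.
Variables (R : realType) (n r : nat).
Local Notation rstring := (rstring n r).
Local Notation freqs := (freqs R n r).

Definition upd (x : rstring) (a : 'I_n) (v : 'I_r) : rstring :=
  [ffun b => if b == a then v else x b].

Definition sw (v v0 u : 'I_r) : 'I_r := if u == v then v0 else if u == v0 then v else u.

Lemma swK (v v0 : 'I_r) : involutive (sw v v0).
Proof.
move=> u; rewrite /sw.
case E1: (u == v).
  move/eqP: E1 => ->; rewrite eqxx; case E3: (v0 == v) => //.
  by move/eqP: E3.
case E2: (u == v0).
  by move/eqP: E2 => e; rewrite e in E1 *; rewrite eqxx.
by rewrite E1 E2.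
Qed.
Lemma sw_eq (v v0 u : 'I_r) : (sw v v0 u == v) = (u == v0).
Proof.
rewrite /sw.
case E1: (u == v).
  by move/eqP: E1 => ->; rewrite eq_sym.
case E2: (u == v0); first by rewrite eqxx.
by rewrite ?E1.
Qed.

Lemma shift_coord (a : 'I_n) (M : rstring -> R) v v0 :
  (forall x u, M (upd x a u) = M x) ->
  \sum_(x : rstring) ((x a == v)%:R * M x) = \sum_(x : rstring) ((x a == v0)%:R * M x).
Proof.
move=> HM.
pose s := fun x : rstring => upd x a (sw v v0 (x a)).
have ss : cancel s s.
  move=> x; apply/ffunP => b; rewrite /s /upd !ffunE.
  case: eqP => [->|//]; by rewrite eqxx swK.
rewrite (reindex_inj (can_inj ss)) /=; apply: eq_bigr => x _.
by rewrite /s HM /upd ffunE eqxx sw_eq.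
Qed.

Lemma split_coord (a : 'I_n) (al : 'I_r -> R) (M : rstring -> R) v0 :
  (forall x u, M (upd x a u) = M x) ->
  \sum_(x : rstring) (al (x a) * M x) = (\sum_v al v) * \sum_(x : rstring) ((x a == v0)%:R * M x).
Proof.
move=> HM.
have -> : \sum_(x : rstring) (al (x a) * M x) = \sum_(x : rstring) \sum_v (al v * ((x a == v)%:R * M x)).
  apply: eq_bigr => x _; rewrite (bigD1 (x a)) //= eqxx mul1r big1 ?addr0 //.
  by move=> v /negPf; rewrite eq_sym => ->; rewrite mul0r mulr0.
rewrite exchange_big mulr_suml; apply: eq_bigr => v _.
by rewrite -mulr_sumr (shift_coord v v0 HM).
Qed.

Lemma sp_split (p : freqs) a x :
  sample_prob p x = p a (x a) * \prod_(b | b != a) p b (x b).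
Proof. by rewrite /sample_prob (bigD1 a). Qed.

Lemma spr_upd (p : freqs) a x v :
  \prod_(b | b != a) p b (upd x a v b) = \prod_(b | b != a) p b (x b).
Proof. by apply: eq_bigr => b /negPf hb; rewrite ffunE hb. Qed.

Lemma indep (p : freqs) a (g : 'I_r -> R) (F : rstring -> R) :
  \sum_v p a v = 1 -> (forall x u, F (upd x a u) = F x) ->
  \sum_(x : rstring) (sample_prob p x * (g (x a) * F x)) =
  (\sum_v p a v * g v) * \sum_(x : rstring) (sample_prob p x * F x).
Proof.
move=> h1 HF.
case: (pickP (fun _ : 'I_r => true)) => [v0 _|h0]; last first.
  by move: h1; rewrite big_pred0 // => /eqP; rewrite eq_sym oner_eq0.
pose M := fun x : rstring => (\prod_(b | b != a) p b (x b)) * F x.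
have HM : forall x u, M (upd x a u) = M x by move=> x u; rewrite /M spr_upd HF.
have -> : \sum_(x : rstring) (sample_prob p x * (g (x a) * F x)) =
          \sum_(x : rstring) ((p a (x a) * g (x a)) * M x).
  by apply: eq_bigr => x _; rewrite (sp_split p a) /M; ring.
have -> : \sum_(x : rstring) (sample_prob p x * F x) = \sum_(x : rstring) (p a (x a) * M x).
  by apply: eq_bigr => x _; rewrite (sp_split p a) /M; ring.
rewrite (split_coord (fun v => p a v * g v) v0 HM) (split_coord (p a) v0 HM).
by rewrite h1 mul1r.
Qed.

Lemma sp_sum (p : freqs) : (forall a, \sum_v p a v = 1) ->
  \sum_(x : rstring) sample_prob p x = 1.
Proof.
move=> h; rewrite /sample_prob -(bigA_distr_bigA (fun a v => p a v)).
by rewrite big1.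
Qed.
End Aux.

Section Good.
Variables (R : realType) (n r : nat) (K : R).
Local Notation rstring := (rstring n r).
Local Notation freqs := (freqs R n r).

Definition good (p : freqs) :=
  (forall a v, exists m : nat, p a v = m%:R / K) /\ (forall a, \sum_v p a v = 1).

Lemma sum_ind (u : 'I_r) : \sum_v ((u == v)%:R : R) = 1.
Proof.
rewrite (bigD1 u) //= eqxx big1 ?addr0 // => v /negPf.
by rewrite eq_sym => ->.
Qed.

Definition updg (p : freqs) (w l : rstring) : freqs :=
  fun a v => p a v + K^-1 * (((w a == v) : nat)%:R - ((l a == v) : nat)%:R).

Lemma sp_nz (p : freqs) z a : sample_prob p z != 0 -> p a (z a) != 0.
Proof. by rewrite (sp_split p a) mulf_eq0 negb_or => /andP[]. Qed.

Lemma good_updg p w l : 0 < K -> good p -> sample_prob p l != 0 ->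
  good (updg p w l).
Proof.
move=> K0 [hm hs] hl; split; last first.
  move=> a; rewrite /updg big_split /= hs -mulr_sumr sumrB.
  have e : forall u : 'I_r, \sum_v (((u == v) : nat)%:R : R) = 1.
    by move=> u; apply: sum_ind.
  by rewrite !e subrr mulr0 addr0.
move=> a v; have [m hm'] := hm a v; rewrite /updg hm'.
have Kn : K != 0 by rewrite gt_eqF.
case: (w a == v); case: eqP => hlv /=.
- by exists m; rewrite subrr mulr0 addr0.
- by exists m.+1; rewrite subr0 mulr1 -addn1 (natrD _ m 1) mulrDl div1r mulrC addrC.
- have : p a (l a) != 0 by apply: sp_nz.
  rewrite hlv hm'; case: m hm' => [|m] hm'; first by rewrite mul0r eqxx.
  move=> _; exists m; rewrite sub0r mulrN1 -addn1 (natrD _ m 1) mulrDl div1r mulrC; ring.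
- by exists m; rewrite subrr mulr0 addr0.
Qed.

Lemma good_step p x y : 0 < K -> good p ->
  0 < sample_prob p x * sample_prob p y -> good (cga_update K p x y).
Proof.
move=> K0 g /gt_eqF /negbT; rewrite mulf_eq0 negb_or => /andP[hx hy].
rewrite /cga_update; case: ifP => _ /=.
  exact: (good_updg y K0 g hx).
exact: (good_updg x K0 g hy).
Qed.

Lemma good_reach p : 0 < K -> (exists m : nat, K = (m * r)%:R) ->
  reachable K p -> good p.
Proof.
move=> K0 [m hK]; elim => [|q x y _ IH hpos]; last exact: good_step.
have r0 : r != 0%N by apply/eqP => r0; move: K0; rewrite hK r0 muln0 ltxx.
have m0 : m != 0%N by apply/eqP => m0; move: K0; rewrite hK m0 mul0n ltxx.
split.
  move=> a v; exists m; rewrite /init_freqs hK natrM invfM mulrA mulfV ?mul1r //.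
  by rewrite pnatr_eq0.
move=> a; rewrite /init_freqs sumr_const card_ord -[_ *+ r]mulr_natr mulVf //.
by rewrite pnatr_eq0.
Qed.
End Good.

Section Main.
Variables (R : realType) (n r : nat) (K : R) (p : freqs R n r) (i : 'I_n) (j : 'I_r).
Hypothesis K0 : 0 < K.
Hypothesis gp : good K p.
Hypothesis hj : (j : nat) = r.-1.
Local Notation rstring := (rstring n r).
Local Notation sp := (sample_prob p).

Definition Ai (x : rstring) : bool := x i == j.
Definition Si (x : rstring) : nat := (\sum_(b < n | b != i) (x b == j))%N.

Lemma rOM x : rOneMax x = (Ai x + Si x)%N.
Proof.
rewrite /rOneMax (bigD1 i) //= -hj /Ai /Si.
congr (_ + _)%N; apply: eq_bigr => b _; by rewrite val_eqE.
Qed.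

Lemma Si_upd x v : Si (upd x i v) = Si x.
Proof. by apply: eq_bigr => b /negPf hb; rewrite ffunE hb. Qed.

Lemma p_ge0 a v : 0 <= p a v.
Proof. have [m ->] := gp.1 a v; by rewrite divr_ge0 // ltW. Qed.

Lemma sp_ge0 x : 0 <= sp x.
Proof. by apply: prodr_ge0 => a _; apply: p_ge0. Qed.

Definition E2 (G : rstring -> rstring -> R) :=
  \sum_(x : rstring) \sum_(y : rstring) (sp x * sp y * G x y).

Lemma E2_1 : E2 (fun _ _ => 1) = 1.
Proof.
have h := sp_sum gp.2.
rewrite /E2 -[RHS]h; apply: eq_bigr => x _.
under eq_bigr => y _ do rewrite mulr1.
by rewrite -mulr_sumr h mulr1.
Qed.

Lemma E2D G1 G2 : E2 (fun x y => G1 x y + G2 x y) = E2 G1 + E2 G2.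
Proof.
rewrite /E2 -big_split; apply: eq_bigr => x _; rewrite -big_split.
by apply: eq_bigr => y _; rewrite mulrDr.
Qed.

Lemma E2Z c G : E2 (fun x y => c * G x y) = c * E2 G.
Proof.
rewrite /E2 mulr_sumr; apply: eq_bigr => x _; rewrite mulr_sumr.
by apply: eq_bigr => y _; ring.
Qed.

Lemma E2_le G1 G2 : (forall x y, G1 x y <= G2 x y) -> E2 G1 <= E2 G2.
Proof.
move=> h; rewrite /E2; apply: ler_sum => x _; apply: ler_sum => y _.
by apply: ler_wpM2l => //; apply: mulr_ge0; apply: sp_ge0.
Qed.

Lemma E2_ge0 G : (forall x y, 0 <= G x y) -> 0 <= E2 G.
Proof.
move=> h; have := @E2_le (fun _ _ => 0) G h.
by rewrite /E2 big1 // => x _; rewrite big1 // => y _; rewrite mulr0.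
Qed.

Lemma pair_indep (g1 g2 : 'I_r -> R) (G : nat -> nat -> R) :
  E2 (fun x y => g1 (x i) * g2 (y i) * G (Si x) (Si y)) =
  (\sum_v p i v * g1 v) * (\sum_v p i v * g2 v) * E2 (fun x y => G (Si x) (Si y)).
Proof.
rewrite /E2.
have inner : forall x : rstring, \sum_(y : rstring) (sp x * sp y * (g1 (x i) * g2 (y i) * G (Si x) (Si y)))
   = sp x * (g1 (x i) * ((\sum_v p i v * g2 v) * \sum_(y : rstring) (sp y * G (Si x) (Si y)))).
  move=> x; rewrite -(indep g2 (gp.2 i)); last by move=> y u; rewrite Si_upd.
  by rewrite !mulr_sumr; apply: eq_bigr => y _; ring.
under eq_bigr => x _ do rewrite inner.
rewrite (indep g1 (gp.2 i)); last by move=> x u; rewrite Si_upd.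
rewrite -mulrA; congr (_ * _); rewrite mulr_sumr; apply: eq_bigr => x _.
rewrite mulrCA; congr (_ * _); rewrite mulr_sumr; apply: eq_bigr => y _.
by rewrite mulrA.
Qed.


Definition ind (b : bool) : R := (b : nat)%:R.

Lemma ind_ge0 b : 0 <= ind b. Proof. by case: b; rewrite /ind. Qed.
Lemma ind_le1 b : ind b <= 1. Proof. by case: b; rewrite /ind. Qed.

Definition delta x y : R :=
  if (rOneMax x < rOneMax y)%N then ind (Ai y) - ind (Ai x) else ind (Ai x) - ind (Ai y).

Lemma upd_ij x y : cga_update K p x y i j = p i j + K^-1 * delta x y.
Proof. by rewrite /cga_update /delta; case: ifP. Qed.

Definition Pl x y := ind (Ai x) * ind (~~ Ai y) * ind (Si y <= Si x + 1)%N
                   + ind (~~ Ai x) * ind (Ai y) * ind (Si x <= Si y)%N.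
Definition Mi x y := ind (Ai x) * ind (~~ Ai y) * ind (Si x + 1 < Si y)%N
                   + ind (~~ Ai x) * ind (Ai y) * ind (Si y < Si x)%N.

Lemma exp_delta h x y :
  expR (- (h * delta x y)) = 1 + Pl x y * (expR (-h) - 1) + Mi x y * (expR h - 1).
Proof.
rewrite /delta /Pl /Mi !rOM /ind.
case: (Ai x); case: (Ai y) => /=.
- by rewrite !subrr if_same mulr0 oppr0 expR0; ring.
- case: ifP => h1; last move/negbT: h1 => h1.
  + have -> : (Si y <= Si x + 1)%N = false by lia.
    have -> : (Si x + 1 < Si y)%N = true by lia.
    by rewrite /= ?subr0 ?sub0r ?mulrN1 ?mulr1 ?opprK; ring.
  + have -> : (Si y <= Si x + 1)%N = true by lia.
    have -> : (Si x + 1 < Si y)%N = false by lia.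
    by rewrite /= ?subr0 ?sub0r ?mulrN1 ?mulr1 ?opprK; ring.
- case: ifP => h1; last move/negbT: h1 => h1.
  + have -> : (Si x <= Si y)%N = true by lia.
    have -> : (Si y < Si x)%N = false by lia.
    by rewrite /= ?subr0 ?sub0r ?mulrN1 ?mulr1 ?opprK; ring.
  + have -> : (Si x <= Si y)%N = false by lia.
    have -> : (Si y < Si x)%N = true by lia.
    by rewrite /= ?subr0 ?sub0r ?mulrN1 ?mulr1 ?opprK; ring.
- by rewrite !subrr if_same mulr0 oppr0 expR0; ring.
Qed.

Definition qq := \sum_v p i v * ind (v == j).
Definition bb := \sum_v p i v * ind (v != j).

Lemma qq_ge0 : 0 <= qq.
Proof. by apply: sumr_ge0 => v _; apply: mulr_ge0; [apply: p_ge0|apply: ind_ge0]. Qed.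
Lemma bb_ge0 : 0 <= bb.
Proof. by apply: sumr_ge0 => v _; apply: mulr_ge0; [apply: p_ge0|apply: ind_ge0]. Qed.

Lemma EPl : E2 Pl = qq * bb * (E2 (fun x y => ind (Si y <= Si x + 1)%N)
                               + E2 (fun x y => ind (Si x <= Si y)%N)).
Proof.
rewrite /Pl E2D.
have e1 := pair_indep (fun v => ind (v == j)) (fun v => ind (v != j))
  (fun a b => ind (b <= a + 1)%N).
have e2 := pair_indep (fun v => ind (v != j)) (fun v => ind (v == j))
  (fun a b => ind (a <= b)%N).
rewrite /= in e1 e2.
rewrite e1 e2 -/qq -/bb; ring.
Qed.

Lemma EMi : E2 Mi = qq * bb * (E2 (fun x y => ind (Si x + 1 < Si y)%N)
                               + E2 (fun x y => ind (Si y < Si x)%N)).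
Proof.
rewrite /Mi E2D.
have e1 := pair_indep (fun v => ind (v == j)) (fun v => ind (v != j))
  (fun a b => ind (a + 1 < b)%N).
have e2 := pair_indep (fun v => ind (v != j)) (fun v => ind (v == j))
  (fun a b => ind (b < a)%N).
rewrite /= in e1 e2.
rewrite e1 e2 -/qq -/bb; ring.
Qed.

Definition Coll := E2 (fun x y => ind (Si x == Si y)).

Lemma step_le h : 0 <= h -> h < 1 -> h <= Coll ->
  E2 (fun x y => expR (- (h * delta x y))) <= 1.
Proof.
move=> h0 h1 hC.
have -> : E2 (fun x y => expR (- (h * delta x y))) =
   1 + E2 Pl * (expR (-h) - 1) + E2 Mi * (expR h - 1).
  have -> : E2 (fun x y => expR (- (h * delta x y))) =
     E2 (fun x y => 1 + Pl x y * (expR (-h) - 1) + Mi x y * (expR h - 1)).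
    by rewrite /E2; apply: eq_bigr => x _; apply: eq_bigr => y _; rewrite exp_delta.
  rewrite [LHS]E2D [in LHS]E2D E2_1; congr (_ + _ + _).
    by rewrite [RHS]mulrC -E2Z /E2; apply: eq_bigr => x _; apply: eq_bigr => y _; ring.
  by rewrite [RHS]mulrC -E2Z /E2; apply: eq_bigr => x _; apply: eq_bigr => y _; ring.
set E1 := E2 (fun x y => ind (Si y <= Si x + 1)%N).
set E2' := E2 (fun x y => ind (Si x <= Si y)%N).
set E3 := E2 (fun x y => ind (Si x + 1 < Si y)%N).
set E4 := E2 (fun x y => ind (Si y < Si x)%N).
have h13 : E1 + E3 = 1.
  rewrite /E1 /E3 -E2D -E2_1 /E2; apply: eq_bigr => x _; apply: eq_bigr => y _.
  by rewrite ltnNge /ind; case: (Si y <= Si x + 1)%N => /=; rewrite ?addr0 ?add0r.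
have h24 : E2' + E4 = 1.
  rewrite /E2' /E4 -E2D -E2_1 /E2; apply: eq_bigr => x _; apply: eq_bigr => y _.
  by rewrite ltnNge /ind; case: (Si x <= Si y)%N => /=; rewrite ?addr0 ?add0r.
have h12 : 1 + Coll <= E1 + E2'.
  rewrite /Coll /E1 /E2' -E2D -E2_1 -E2D; apply: E2_le => x y.
  rewrite /ind -[1 + _](natrD _ 1%N) -natrD ler_nat.
  case: (ltngtP (Si x) (Si y)) => hxy /=; lia.
have E3g : 0 <= E3 by apply: E2_ge0 => x y; apply: ind_ge0.
have E4g : 0 <= E4 by apply: E2_ge0 => x y; apply: ind_ge0.
rewrite EPl EMi -/E1 -/E2' -/E3 -/E4.
have qb : 0 <= qq * bb by apply: mulr_ge0; [apply: qq_ge0|apply: bb_ge0].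
set u := expR h.
have u1 : 1 <= u by rewrite /u -expR0 ler_expR.
have eN : expR (- h) = u^-1 by rewrite expRN.
have uh : u * (1 - h) <= 1.
  have u0 : 0 < u by apply: expR_gt0.
  have hh : 1 - h <= u^-1 by rewrite -eN; have := expR_ge1Dx (-h); lra.
  apply: le_trans (_ : u * u^-1 <= 1); first by apply: ler_wpM2l; lra.
  by rewrite mulfV ?gt_eqF.
rewrite eN.
set s := E1 + E2'.
have -> : E3 + E4 = 2 - s by rewrite /s; lra.
have s2 : s <= 2 by rewrite /s; lra.
have sh : 1 + h <= s by rewrite /s; lra.
have key : (u^-1 - 1) * s + (u - 1) * (2 - s) <= 0.
  have u0 : 0 < u by lra.
  have -> : (u^-1 - 1) * s + (u - 1) * (2 - s) = u^-1 * ((u - 1) * (u * (2 - s) - s)).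
    by field; rewrite gt_eqF.
  rewrite pmulr_rle0 ?invr_gt0 //.
  apply: mulr_ge0_le0; first lra.
  nra.
have : qq * bb * ((u^-1 - 1) * s + (u - 1) * (2 - s)) <= 0.
  by apply: mulr_ge0_le0.
lra.
Qed.

Lemma p_le1 a v : p a v <= 1.
Proof.
rewrite -(gp.2 a) (bigD1 v) //= lerDl; apply: sumr_ge0 => w _; apply: p_ge0.
Qed.

Lemma Si_le x : (Si x <= n)%N.
Proof.
have : (Si x <= \sum_(b < n | b != i) 1)%N by apply: leq_sum => b _; apply: leq_b1.
move/leq_trans; apply.
by rewrite sum1_card (leq_trans (max_card _)) // card_ord.
Qed.

Lemma sum_pick (F : nat -> R) a : (a <= n)%N ->
  \sum_(k < n.+1) F k * ind (a == k) = F a.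
Proof.
move=> ha; have hx : (a < n.+1)%N by rewrite ltnS.
rewrite (bigD1 (Ordinal hx)) //= eqxx mulr1 big1 ?addr0 // => k hk.
move: hk; rewrite -val_eqE /= eq_sym => /negPf ->; by rewrite mulr0.
Qed.

Definition Pk (k : nat) := \sum_(x : rstring) sp x * ind (Si x == k).

Lemma Coll_eq : Coll = \sum_(k < n.+1) Pk k ^+ 2.
Proof.
rewrite /Coll /E2.
transitivity (\sum_(k < n.+1) \sum_(x : rstring) \sum_(y : rstring)
   ((sp x * ind (Si x == k)) * (sp y * ind (Si y == k)))).
  rewrite [RHS]exchange_big; apply: eq_bigr => x _.
  rewrite [RHS]exchange_big; apply: eq_bigr => y _.
  rewrite [Si x == Si y]eq_sym -(sum_pick (fun k => ind (Si y == k)) (Si_le x)) mulr_sumr.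
  by apply: eq_bigr => k _; ring.
apply: eq_bigr => k _; rewrite expr2 /Pk mulr_suml; apply: eq_bigr => x _.
by rewrite mulr_sumr.
Qed.

Definition mu := \sum_(b < n | b != i) p b j.

Definition Var := \sum_(x : rstring) sp x * ((Si x)%:R - mu) ^+ 2.

Lemma Var_le : Var <= n%:R.
Proof.
pose D (b : 'I_n) (x : rstring) := ind (x b == j) - p b j.
have eS : forall x, (Si x)%:R - mu = \sum_(b < n | b != i) D b x.
  by move=> x; rewrite /Si natr_sum /mu -sumrB.
have e0 : forall a b, a != b -> \sum_(x : rstring) sp x * (D a x * D b x) = 0.
  move=> a b hab.
  rewrite (indep (fun v => ind (v == j) - p a j) (gp.2 a)); last first.
    have hba : b != a by rewrite eq_sym.
    by move=> x u; rewrite /D /upd ffunE (negPf hba).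
  suff -> : \sum_v p a v * (ind (v == j) - p a j) = 0 by rewrite mul0r.
  rewrite (eq_bigr (fun v => p a v * ind (v == j) - p a v * p a j)); last first.
    by move=> v _; rewrite mulrBr.
  rewrite sumrB -mulr_suml (gp.2 a) mul1r.
  rewrite (bigD1 j) //= big1 => [|v hv]; last by rewrite /ind (negPf hv) mulr0.
  by rewrite /ind eqxx /= mulr1 addr0 subrr.
have e1 : forall a, \sum_(x : rstring) sp x * (D a x * D a x) <= 1.
  move=> a; rewrite -(sp_sum gp.2); apply: ler_sum => x _.
  rewrite -[X in _ <= X]mulr1; apply: ler_wpM2l; first exact: sp_ge0.
  have := p_ge0 a j; have := p_le1 a j; rewrite /D /ind.
  case: (x a == j) => /= h1 h2; nra.
have eV : Var = \sum_(a < n | a != i) \sum_(b < n | b != i)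
                \sum_(x : rstring) sp x * (D a x * D b x).
  transitivity (\sum_(a < n | a != i) \sum_(x : rstring) \sum_(b < n | b != i)
                 sp x * (D a x * D b x)); last first.
    by apply: eq_bigr => a _; rewrite exchange_big.
  rewrite exchange_big /Var; apply: eq_bigr => x _.
  rewrite eS expr2 mulr_suml mulr_sumr; apply: eq_bigr => a _.
  by rewrite mulr_sumr mulr_sumr; apply: eq_bigr => b _.
rewrite eV.
apply: (le_trans (_ : _ <= \sum_(a < n | a != i) 1)).
  apply: ler_sum => a ha.
  rewrite (bigD1 a) //= [X in _ + X]big1 ?addr0; first exact: e1.
  by move=> b /andP[_ hb]; apply: e0; rewrite eq_sym.
rewrite sumr_const -[_ *+ _]mulr_natr mul1r ler_nat.
by rewrite (leq_trans (max_card _)) // card_ord.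
Qed.

Lemma count_win N m0 T :
  (\sum_(k < N) ((m0 <= k) && (k <= m0 + T)) <= T.+1)%N.
Proof.
suff -> : (\sum_(k < N) ((m0 <= k) && (k <= m0 + T)))%N = minn (N - m0) T.+1 by lia.
elim: N => [|N IH]; first by rewrite big_ord0.
rewrite big_ord_recr /= IH.
case: (boolP ((m0 <= N) && (N <= m0 + T))%N) => /= h.
  move/andP: h => [h1 h2]; lia.
rewrite negb_and -!ltnNge in h; case/orP: h => h; lia.
Qed.

Lemma Coll_ge : (0 < n)%N -> (144 * Num.sqrt n%:R)^-1 <= Coll.
Proof.
move=> n0.
set sg := Num.sqrt n%:R.
have sg1 : 1 <= sg.
  by rewrite /sg -[X in X <= _]sqrtr1 ler_sqrt ?ler0n // ler1n.
set t := 2 * sg.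
have t0 : 0 < t by rewrite /t; lra.
have tt : t ^+ 2 = 4 * n%:R.
  by rewrite /t exprMn sqr_sqrtr // ?ler0n //; congr (_ * _); rewrite expr2; lra.
pose J (k : nat) := `|k%:R - mu| < t.
set M := \sum_(k < n.+1) ind (J k) * Pk k.
set N := \sum_(k < n.+1) ind (J k).
have hA : forall s, 2 * s * M - s ^+ 2 * N <= Coll.
  move=> s; rewrite Coll_eq /M /N mulr_sumr mulr_sumr -sumrB; apply: ler_sum => k _.
  have := sqr_ge0 (Pk k - s); have := sqr_ge0 (Pk k).
  rewrite /ind; case: (J k) => /= h1 h2; nra.
have hM : 3/4 <= M.
  have eM : M = \sum_(x : rstring) sp x * ind (J (Si x)).
    rewrite /M.
    under eq_bigr => k _ do rewrite /Pk mulr_sumr.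
    rewrite exchange_big; apply: eq_bigr => x _.
    rewrite -(sum_pick (fun k => ind (J k)) (Si_le x)) mulr_sumr.
    by apply: eq_bigr => k _; ring.
  have eC : M + \sum_(x : rstring) sp x * ind (~~ J (Si x)) = 1.
    rewrite eM -big_split -(sp_sum gp.2); apply: eq_bigr => x _.
    by rewrite /= -mulrDr /ind; case: (J (Si x)) => /=; rewrite ?addr0 ?add0r mulr1.
  have hc : \sum_(x : rstring) sp x * ind (~~ J (Si x)) <= Var / t ^+ 2.
    rewrite /Var mulr_suml; apply: ler_sum => x _; rewrite -mulrA.
    apply: ler_wpM2l; first exact: sp_ge0.
    rewrite /ind /J; case: (boolP (`|(Si x)%:R - mu| < t)) => h /=.
      by apply: divr_ge0; [apply: sqr_ge0 | apply: sqr_ge0].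
    rewrite -leNgt in h.
    rewrite ler_pdivlMr ?exprn_gt0 // mul1r -(real_normK (num_real ((Si x)%:R - mu))).
    by have := normr_ge0 ((Si x)%:R - mu); nra.
  have hV : Var / t ^+ 2 <= 1/4.
    rewrite tt ler_pdivrMr ?mulr_gt0 ?ltr0n //.
    have := Var_le; lra.
  lra.
have hN : N <= 2 * t + 2.
  have [m0 [hm0a hm0b hm1]] : exists m0 : nat,
      [/\ 0 <= mu - t -> m0%:R <= mu - t, mu - t < 0 -> m0 = 0%N &
          mu - t < (m0.+1)%:R].
    exists (Num.truncn (mu - t)); split.
    - by move=> h; rewrite truncn_le.
    - by move=> h; apply/truncn0Pn; rewrite -ltNge; apply: lt_trans h _.
    - exact: truncnS_gt.
  have [T [hT hT1]] : exists T : nat, T%:R <= 2 * t + 1 /\ 2 * t + 1 < (T.+1)%:R.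
    exists (Num.truncn (2 * t + 1)); split; last exact: truncnS_gt.
    rewrite truncn_le; apply: addr_ge0 => //; apply: mulr_ge0 => //; exact: ltW.
  apply: (le_trans (_ : N <= \sum_(k < n.+1) ind ((m0 <= k) && (k <= m0 + T))%N)).
    apply: ler_sum => k _; rewrite /ind /J.
    case: (boolP (`|k%:R - mu| < t)) => h /=; last by case: (_ && _).
    move: h; rewrite ltr_distl => /andP[h1 h2].
    have -> : (m0 <= k)%N.
      case: (lerP 0 (mu - t)) => h0.
        rewrite -(ler_nat R); apply: le_trans (ltW h1); exact: hm0a.
      by rewrite hm0b.
    have -> : (k <= m0 + T)%N.
      rewrite -ltnS -(ltr_nat R).
      have e : ((m0 + T).+1)%:R = (m0.+1)%:R + (T.+1)%:R - 1 :> R.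
        by rewrite -[(m0 + T).+1]addn1 -[m0.+1]addn1 -[T.+1]addn1 !natrD; ring.
      rewrite e; lra.
    by [].
  rewrite /ind -natr_sum.
  apply: (le_trans (_ : _ <= (T.+1)%:R)); first by rewrite ler_nat count_win.
  rewrite -[T.+1]addn1 natrD; lra.
pose D := 2 * t + 2.
have D0 : 0 < D by rewrite /D; lra.
pose s := 3 / (4 * D).
have s0 : 0 <= s by rewrite /s divr_ge0 // ?mulr_ge0 // ltW.
have h1 : 2 * s * (3/4) - s ^+ 2 * D <= 2 * s * M - s ^+ 2 * N.
  have e1 : 0 <= s * (M - 3/4) by apply: mulr_ge0; lra.
  have e2 : 0 <= s ^+ 2 * (D - N) by apply: mulr_ge0; [apply: sqr_ge0 | rewrite /D; lra].
  lra.
have h2 : 2 * s * (3/4) - s ^+ 2 * D = 9 / (16 * D).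
  by rewrite /s; field; rewrite gt_eqF.
have h3 : (144 * sg)^-1 <= 9 / (16 * D).
  rewrite -subr_ge0.
  have -> : 9 / (16 * D) - (144 * sg)^-1 = (9 * 144 * sg - 16 * D) / (16 * D * (144 * sg)).
    by field; rewrite !gt_eqF //; lra.
  apply: divr_ge0; first by rewrite /D /t; lra.
  apply: mulr_ge0; apply: mulr_ge0; lra.
apply: le_trans h3 _; rewrite -h2; apply: le_trans h1 _; exact: hA.
Qed.

End Main.

Lemma hit_le (R : realType) n r (K : R) (i : 'I_n) (j : 'I_r) (b h : R) :
  (j : nat) = r.-1 -> 0 < K -> 0 <= h -> h < 1 ->
  h <= (144 * Num.sqrt n%:R)^-1 ->
  forall T (p : freqs R n r), good K p ->
  hit_prob K (fun q => q i j < b) T p <= expR (K * h * (b - p i j)).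
Proof.
move=> hj K0 h0 h1 hC.
have n0 : (0 < n)%N by case: (n) i => [[]|].
have Kh : 0 <= K * h by apply: mulr_ge0 => //; apply: ltW.
have bad1 : forall q : freqs R n r, q i j < b -> 1 <= expR (K * h * (b - q i j)).
  move=> q hq; rewrite -expR0 ler_expR; apply: mulr_ge0 => //; lra.
elim => [|T IH] p gp /=.
  case: ifP => hb; first exact: bad1.
  exact: expR_ge0.
case: ifP => hb; first exact: bad1.
have hCo := le_trans hC (Coll_ge i K0 gp hj n0).
have := step_le K0 gp hj h0 h1 hCo.
set Ex := expR (K * h * (b - p i j)).
have Ex0 : 0 <= Ex by apply: expR_ge0.
move=> hs.
apply: (le_trans (_ : _ <= Ex * E2 p (fun x y => expR (- (h * delta R i j x y))))); last first.
  by rewrite -[X in _ <= X]mulr1; apply: ler_wpM2l.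
rewrite /E2 mulr_sumr; apply: ler_sum => x _; rewrite mulr_sumr; apply: ler_sum => y _.
have w0 : 0 <= sample_prob p x * sample_prob p y by apply: mulr_ge0; apply: (sp_ge0 K0 gp).
have -> : Ex * (sample_prob p x * sample_prob p y * expR (- (h * delta R i j x y)))
   = sample_prob p x * sample_prob p y * expR (K * h * (b - cga_update K p x y i j)).
  have ee : expR (K * h * (b - (p i j + K^-1 * delta R i j x y)))
     = Ex * expR (- (h * delta R i j x y)).
    by rewrite /Ex -expRD; congr expR; field; rewrite gt_eqF.
  by rewrite upd_ij ee; ring.
case: (ltrP 0 (sample_prob p x * sample_prob p y)) => hw.
  apply: ler_wpM2l => //; apply: IH; exact: good_step.
have -> : sample_prob p x * sample_prob p y = 0 by apply/eqP; rewrite eq_le hw.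
by rewrite !mul0r.
Qed.

Theorem lemma2 (R : realType) (d : nat) :
  exists c c' : R, 0 < c' /\ exists n0 : nat,
  forall (n r : nat) (K : R),
    (n0 <= n)%N -> (2 <= r)%N ->
    (exists m : nat, K = (m * r)%:R) ->
    c * r%:R * Num.sqrt n%:R * ln n%:R <= K ->
    K <= n%:R ^+ d -> (r <= n ^ d)%N ->
    forall (i : 'I_n) (j : 'I_r), (j : nat) = r.-1 ->
    forall (k : R), 0 < k ->
    forall p : freqs R n r, reachable K p ->
    k / r%:R <= p i j ->
    forall T : nat, T%:R <= c' * K * Num.sqrt n%:R * ln r%:R ->
    hit_prob K (fun q => q i j < k / r%:R - (2 * r%:R)^-1) T p
      <= n%:R `^ (- (K / (288 * r%:R * Num.sqrt n%:R * ln n%:R))).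
Proof.
exists 1, 1; split => //; exists 2%N.
move=> n r K hn hr hK hc _ _ i j hj k k0 p hp hk T _.
have n1 : 1 < n%:R :> R by rewrite ltr1n.
rewrite /powR ifF; last by rewrite pnatr_eq0; apply/eqP => e; move: hn; rewrite e.
have sq1 : 1 <= Num.sqrt (n%:R : R).
  by rewrite -[X in X <= _]sqrtr1 ler_sqrt ?ler0n // ltW.
have L0 : 0 < ln (n%:R : R) by apply: ln_gt0.
move: hc sq1; move Esq: (Num.sqrt (n%:R : R)) => sq hc sq1.
move: (ln (n%:R : R)) L0 hc => L L0 hc.
have r0 : 0 < r%:R :> R by rewrite ltr0n; apply: leq_trans hr.
have K0 : 0 < K.
  apply: lt_le_trans hc; rewrite mul1r; apply: mulr_gt0 => //.
  apply: mulr_gt0 => //; lra.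
have gp := good_reach K0 hK hp.
set h := (144 * sq)^-1.
have h0 : 0 <= h by rewrite /h invr_ge0; lra.
have h1 : h < 1 by rewrite /h invf_lt1; lra.
have hh : h <= (144 * Num.sqrt (n%:R : R))^-1 by rewrite Esq.
have H := @hit_le R n r K i j (k / r%:R - (2 * r%:R)^-1) h hj K0 h0 h1 hh T p gp.
apply: le_trans H _.
rewrite ler_expR.
have e : -(K / (288 * r%:R * sq * L)) * L = K * h * (-(2 * r%:R)^-1).
  by rewrite /h; field; rewrite !gt_eqF //; lra.
rewrite e; apply: ler_wpM2l; first by apply: mulr_ge0 => //; apply: ltW.
lra.
Qed.
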